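(* There exists an absolute constant $C_2>0$ such that for every $\delta_0>0$ the following holds: if $\|\mathcal T-\mathcal S\|_{\mathrm{op}}<\delta_0$ and $x\in\mathbb C^n$ satisfies $$8\frac{|\langle x,x^\natural\rangle|^2}{\|x^\natural\|^4}+\Big(4+\tfrac14\delta_0C_2\Big)\frac{\|x\|^2}{\|x^\natural\|^2}\le 4-\tfrac14\delta_0C_2,$$ then $(x^{\natural+})^TH_f(x^+)\,x^{\natural+}<0$, where $H_f$ is the Hessian of $f$ with respect to $x^+$.
   Context: Let $n,m\ge 1$, $a_1,\dots,a_m\in\mathbb C^n$ and $x^\natural\in\mathbb C^n$ with $x^\natural\neq0$. For $a,b\in\mathbb C^n$ write $\langle a,b\rangle=\sum_{j}a_j\overline{b_j}$ and let $\|\cdot\|$ be the Euclidean norm. Let $y_i=|\langle a_i,x^\natural\rangle|^2$. For $v\in\mathbb C^n$ put $v^+=(\mathrm{Re}\,v,\mathrm{Im}\,v)\in\mathbb R^{2n}$ and $v^-=(-\mathrm{Im}\,v,\mathrm{Re}\,v)$; $x$ and $x^+$ always correspond. Define $f:\mathbb R^{2n}\to\mathbb R$ by $f(x^+)=\sum_{i=1}^m\big(|\langle a_i,x\rangle|^2-y_i\big)^2$. Fix $\sigma>0$ (in the paper, $\sigma^2=\mathrm{Var}((a_i^+)_1)$ for random measurement vectors), set $c=m\sigma^4$. Define the order-4 tensors on $\mathbb R^{2n}$: $\mathcal T=\frac1c\sum_{i=1}^m(a_i^+)^{\otimes 4}$ and $\mathcal S_{i_1i_2i_3i_4}=\mathbf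 1_{i_1=i_2,\,i_3=i_4}+\mathbf 1_{i_1=i_3,\,i_2=i_4}+\mathbf 1_{i_1=i_4,\,i_2=i_3}$, and $\|\mathcal R\|_{\mathrm{op}}=\sup\{\langle \mathcal R,u_1\otimes u_2\otimes u_3\otimes u_4\rangle:\ u_j\in\mathbb R^{2n},\ \|u_1\|\|u_2\|\|u_3\|\|u_4\|=1\}$ (tensor inner product = sum of entrywise products). *)

(* Defs.v *)
From HB Require Import structures.
From mathcomp Require Import all_boot all_order all_algebra.
From mathcomp Require Import all_classical all_reals all_analysis.
From mathcomp Require Import complex.
Set Implicit Arguments.
Unset Strict Implicit.
Unset Printing Implicit Defensive.
Import Order.TTheory GRing.Theory Num.Theory.
Local Open Scope ring_scope.

Section PhaseRetrieval.
Variable R : realType.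

Definition cmod (z : R[i]) : R := Normc.normc z.

Definition cinner n (a b : 'I_n -> R[i]) : R[i] := \sum_(j < n) a j * conjc (b j).

Definition cnorm n (x : 'I_n -> R[i]) : R := Num.sqrt (\sum_(j < n) cmod (x j) ^+ 2).

Definition vplus n (v : 'I_n -> R[i]) : 'rV[R]_(n + n) :=
  \row_(k < n + n) match fintype.split k with inl j => complex.Re (v j) | inr j => complex.Im (v j) end.

Definition unplus n (u : 'rV[R]_(n + n)) : 'I_n -> R[i] :=
  fun j => Complex (u ord0 (lshift n j)) (u ord0 (rshift n j)).

Definition fobj n m (a : 'I_m -> 'I_n -> R[i]) (xnat : 'I_n -> R[i])
  (u : 'rV[R]_(n + n)) : R :=
  \sum_(i < m) (cmod (cinner (a i) (unplus u)) ^+ 2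
                - cmod (cinner (a i) xnat) ^+ 2) ^+ 2.

Definition hessian N (g : 'rV[R]_N -> R) (u : 'rV[R]_N) : 'M[R]_N :=
  \matrix_(j < N, k < N) 'D_(delta_mx ord0 j) ('D_(delta_mx ord0 k) g) u.

Definition qform N (H : 'M[R]_N) (v : 'rV[R]_N) : R := (v *m H *m v^T) ord0 ord0.

Definition tensor4 N := 'I_N -> 'I_N -> 'I_N -> 'I_N -> R.

Definition tensorT n m (sigma : R) (a : 'I_m -> 'I_n -> R[i]) : tensor4 (n + n) :=
  fun i1 i2 i3 i4 => (m%:R * sigma ^+ 4)^-1 *
    \sum_(i < m) (vplus (a i) ord0 i1 * vplus (a i) ord0 i2 *
                  vplus (a i) ord0 i3 * vplus (a i) ord0 i4).

Definition tensorS N : tensor4 N :=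
  fun i1 i2 i3 i4 =>
    ((i1 == i2) && (i3 == i4))%:R + ((i1 == i3) && (i2 == i4))%:R
    + ((i1 == i4) && (i2 == i3))%:R.

Definition tsub N (A B : tensor4 N) : tensor4 N :=
  fun i1 i2 i3 i4 => A i1 i2 i3 i4 - B i1 i2 i3 i4.

Definition tinner N (A : tensor4 N) (u1 u2 u3 u4 : 'rV[R]_N) : R :=
  \sum_(i1 < N) \sum_(i2 < N) \sum_(i3 < N) \sum_(i4 < N)
    A i1 i2 i3 i4 * u1 ord0 i1 * u2 ord0 i2 * u3 ord0 i3 * u4 ord0 i4.

Definition rnorm N (u : 'rV[R]_N) : R := Num.sqrt (\sum_(k < N) u ord0 k ^+ 2).

Definition opnorm N (A : tensor4 N) : R :=
  sup [set r : R | exists u1 u2 u3 u4 : 'rV[R]_N,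
         rnorm u1 * rnorm u2 * rnorm u3 * rnorm u4 = 1 /\ r = tinner A u1 u2 u3 u4].

End PhaseRetrieval.

(* Main.v *)
Require Import Defs.
From HB Require Import structures.
From mathcomp Require Import all_boot all_order all_algebra.
From mathcomp Require Import all_classical all_reals all_analysis.
From mathcomp Require Import complex.
From mathcomp Require Import ring lra.
Set Implicit Arguments.
Unset Strict Implicit.
Unset Printing Implicit Defensive.
Import Order.TTheory GRing.Theory Num.Theory.
Import numFieldNormedType.Exports.
Local Open Scope ring_scope.

Section Deriv.
Local Open Scope classical_set_scope.
Local Open Scope ring_scope.
Variable R : realType.
Variable N : nat.
Implicit Types u v w c : 'rV[R]_N.

Definition dot c u : R := \sum_(k < N) c ord0 k * u ord0 k.

Lemma dot_affine c x v h : dot c (h *: v + x) = h * dot c v + dot c x.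
Proof.
rewrite /dot mulr_sumr -big_split /=; apply: eq_bigr => k _.
by rewrite !mxE; ring.
Qed.

Lemma is_derive_dot c x v : is_derive x v (dot c) (dot c v).
Proof.
have E : (fun h : R => h^-1 *: ((dot c \o shift x) (h *: v) - dot c x))
   = (fun h => h^-1 * h * dot c v).
  apply/funext => h /=; rewrite dot_affine addrK /GRing.scale /=; ring.
have C : (fun h : R => h^-1 * h * dot c v) @ 0^' --> dot c v.
  apply: cvg_near_cst; near=> h.
  rewrite mulVf ?mul1r //.
  near: h; exact: nbhs_dnbhs_neq.
constructor.
  rewrite /derivable E; by apply/cvg_ex; exists (dot c v).
rewrite /derive E; exact: cvg_lim.
Unshelve. all: by end_near.
Qed.
End Deriv.


Section Cplx.
Variable R : realType.
Variable n : nat.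
Local Notation N := (n + n)%N.
Implicit Types u v w c : 'rV[R]_N.

Definition Jm w : 'rV[R]_N :=
  \row_(k < N) match fintype.split k with inl j => - w ord0 (rshift n j) | inr j => w ord0 (lshift n j) end.

Lemma split_l (j : 'I_n) : @fintype.split n n (lshift n j) = inl j.
Proof. exact: (unsplitK (inl j)). Qed.
Lemma split_r (j : 'I_n) : @fintype.split n n (rshift n j) = inr j.
Proof. exact: (unsplitK (inr j)). Qed.

Lemma dot_split c u : dot c u = \sum_(j < n) c ord0 (lshift n j) * u ord0 (lshift n j)
   + \sum_(j < n) c ord0 (rshift n j) * u ord0 (rshift n j).
Proof. by rewrite /dot big_split_ord. Qed.

Lemma Re_sum (F : 'I_n -> R[i]) : complex.Re (\sum_(j < n) F j) = \sum_(j < n) complex.Re (F j).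
Proof. by apply: (big_morph (@complex.Re R)) => // [[a b] [c d]]. Qed.
Lemma Im_sum (F : 'I_n -> R[i]) : complex.Im (\sum_(j < n) F j) = \sum_(j < n) complex.Im (F j).
Proof. by apply: (big_morph (@complex.Im R)) => // [[a b] [c d]]. Qed.

Lemma Re_cinner (a : 'I_n -> R[i]) w : complex.Re (cinner a (unplus w)) = dot (vplus a) w.
Proof.
rewrite /cinner Re_sum dot_split -big_split /=; apply: eq_bigr => j _.
rewrite /vplus /unplus !mxE split_l split_r.
case: (a j) => ar ai /=; ring.
Qed.

Lemma Im_cinner (a : 'I_n -> R[i]) w : complex.Im (cinner a (unplus w)) = dot (vplus a) (Jm w).
Proof.
rewrite /cinner Im_sum dot_split -big_split /=; apply: eq_bigr => j _.
rewrite /vplus /unplus /Jm !mxE !split_l !split_r.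
case: (a j) => ar ai /=; ring.
Qed.

Lemma cmod2 (z : R[i]) : cmod z ^+ 2 = complex.Re z ^+ 2 + complex.Im z ^+ 2.
Proof.
case: z => a b; rewrite /cmod /Normc.normc /= sqr_sqrtr //.
by rewrite addr_ge0 // sqr_ge0.
Qed.

Lemma cmod_cinner (a : 'I_n -> R[i]) w :
  cmod (cinner a (unplus w)) ^+ 2 = dot (vplus a) w ^+ 2 + dot (vplus a) (Jm w) ^+ 2.
Proof. by rewrite cmod2 Re_cinner Im_cinner. Qed.

Lemma unplusK (x : 'I_n -> R[i]) : unplus (vplus x) = x.
Proof.
apply/funext => j; rewrite /unplus /vplus !mxE split_l split_r.
by case: (x j).
Qed.

Lemma cnorm2 (x : 'I_n -> R[i]) : cnorm x ^+ 2 = dot (vplus x) (vplus x).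
Proof.
rewrite /cnorm sqr_sqrtr; last by apply: sumr_ge0 => j _; rewrite sqr_ge0.
rewrite dot_split -big_split /=; apply: eq_bigr => j _.
rewrite cmod2 /vplus !mxE split_l split_r.
by rewrite !expr2.
Qed.

Lemma dotC c u : dot c u = dot u c.
Proof. by apply: eq_bigr => k _; rewrite mulrC. Qed.

Lemma dotJ c u : dot c (Jm u) = - dot (Jm c) u.
Proof.
rewrite !dot_split /Jm.
rewrite opprD addrC -!sumrN; congr (_ + _); apply: eq_bigr => j _;
  rewrite !mxE ?split_l ?split_r; ring.
Qed.

Lemma dotJJ c u : dot (Jm c) (Jm u) = dot c u.
Proof.
rewrite !dot_split /Jm addrC; congr (_ + _); apply: eq_bigr => j _;
  rewrite !mxE ?split_l ?split_r; ring.
Qed.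

Lemma dotJself u : dot u (Jm u) = 0.
Proof.
have := dotJ u u; rewrite [dot (Jm u) u]dotC.
set X := dot u (Jm u); lra.
Qed.

End Cplx.


Section Gen.
Variable R : realType.
Variable V : normedModType R.
Implicit Types A B : V -> R.

Lemma is_derive_sq2 A B (y : R) x v (a b : R) :
  is_derive x v A a -> is_derive x v B b ->
  is_derive x v (fun w => (A w ^+ 2 + B w ^+ 2 - y) ^+ 2)
    (2 * (A x ^+ 2 + B x ^+ 2 - y) * (2 * A x * a + 2 * B x * b)).
Proof.
move=> dA dB.
have E : (fun w => (A w ^+ 2 + B w ^+ 2 - y) ^+ 2) =
  (A * A + B * B - cst y) * (A * A + B * B - cst y).
  by apply/funext => w; rewrite !expr2.
rewrite E.
have H1 := is_deriveB (is_deriveD (is_deriveM dA dA) (is_deriveM dB dB)) (is_derive_cst y x v).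
apply: is_derive_eq (is_deriveM H1 H1) _.
change ((A * A + B * B - cst y) x) with (A x * A x + B x * B x - y). rewrite /GRing.scale /=. ring.
Qed.

Lemma is_derive_lin2 A B (y a b : R) x v (a' b' : R) :
  is_derive x v A a' -> is_derive x v B b' ->
  is_derive x v (fun w => 2 * (A w ^+ 2 + B w ^+ 2 - y) * (2 * A w * a + 2 * B w * b))
    (2 * (2 * A x * a' + 2 * B x * b') * (2 * A x * a + 2 * B x * b)
     + 2 * (A x ^+ 2 + B x ^+ 2 - y) * (2 * a' * a + 2 * b' * b)).
Proof.
move=> dA dB.
have E : (fun w => 2 * (A w ^+ 2 + B w ^+ 2 - y) * (2 * A w * a + 2 * B w * b)) =
  (cst 2 * (A * A + B * B - cst y)) * (cst 2 * A * cst a + cst 2 * B * cst b).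
  by apply/funext => w; rewrite !expr2.
rewrite E.
have H1 := is_deriveB (is_deriveD (is_deriveM dA dA) (is_deriveM dB dB)) (is_derive_cst y x v).
have H2 := is_deriveM (is_derive_cst (2:R) x v) H1.
have H3 := is_deriveD (is_deriveM (is_deriveM (is_derive_cst (2:R) x v) dA) (is_derive_cst a x v))
   (is_deriveM (is_deriveM (is_derive_cst (2:R) x v) dB) (is_derive_cst b x v)).
apply: is_derive_eq (is_deriveM H2 H3) _.
change ((A * A + B * B - cst y) x) with (A x * A x + B x * B x - y). change ((cst 2 * (A * A + B * B - cst y)) x) with (2 * (A x * A x + B x * B x - y)). change ((cst 2 * A * cst a + cst 2 * B * cst b) x) with (2 * A x * a + 2 * B x * b). rewrite /GRing.scale /=. ring.
Qed.
End Gen.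

Section Hess.
Variables (R : realType) (n m : nat) (a : 'I_m -> 'I_n -> R[i]) (xnat : 'I_n -> R[i]).
Local Notation N := (n + n)%N.

Definition yv i := cmod (cinner (a i) xnat) ^+ 2.
Definition Af i (w : 'rV[R]_N) := dot (vplus (a i)) w.
Definition Bf i (w : 'rV[R]_N) := dot (vplus (a i)) (Jm w).

Lemma dA i x v : is_derive x v (Af i) (Af i v).
Proof. exact: is_derive_dot. Qed.

Lemma dB i x v : is_derive x v (Bf i) (Bf i v).
Proof.
have -> : Bf i = - dot (Jm (vplus (a i))) by apply/funext => w; rewrite /Bf dotJ.
apply: is_derive_eq (is_deriveN (is_derive_dot _ x v)) _.
by [].
Qed.

Lemma fobjE : fobj a xnat = \sum_(i < m) (fun w => (Af i w ^+ 2 + Bf i w ^+ 2 - yv i) ^+ 2).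
Proof.
apply/funext => w; rewrite fct_sumE /fobj; apply: eq_bigr => i _.
by rewrite cmod_cinner.
Qed.

Lemma D1E (e : 'rV[R]_N) : (fun w => derive (fobj a xnat) w e) =
  fun w => \sum_(i < m) 2 * (Af i w ^+ 2 + Bf i w ^+ 2 - yv i) * (2 * Af i w * Af i e + 2 * Bf i w * Bf i e).
Proof.
apply/funext => w; rewrite fobjE.
have H := is_derive_sum (fun i => is_derive_sq2 (yv i) (dA i w e) (dB i w e)).
exact: (@derive_val _ _ _ _ _ _ _ H).
Qed.

Lemma hessE (u : 'rV[R]_N) j k : hessian (fobj a xnat) u j k =
  \sum_(i < m) (2 * (2 * Af i u * Af i (delta_mx ord0 j) + 2 * Bf i u * Bf i (delta_mx ord0 j))
                 * (2 * Af i u * Af i (delta_mx ord0 k) + 2 * Bf i u * Bf i (delta_mx ord0 k))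
     + 2 * (Af i u ^+ 2 + Bf i u ^+ 2 - yv i) *
        (2 * Af i (delta_mx ord0 j) * Af i (delta_mx ord0 k) + 2 * Bf i (delta_mx ord0 j) * Bf i (delta_mx ord0 k))).
Proof.
rewrite /hessian mxE D1E -fct_sumE.
have H := is_derive_sum (fun i => is_derive_lin2 (yv i) (Af i (delta_mx ord0 k)) (Bf i (delta_mx ord0 k))
   (dA i u (delta_mx ord0 j)) (dB i u (delta_mx ord0 j))).
exact: (@derive_val _ _ _ _ _ _ _ H).
Qed.
End Hess.


Section Q.
Variable R : realType.
Variable N : nat.

Lemma prod_sums (v : 'rV[R]_N) (P Q : 'I_N -> R) :
  (\sum_j v ord0 j * P j) * (\sum_k v ord0 k * Q k) =
  \sum_k \sum_j (v ord0 j * P j) * (v ord0 k * Q k).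
Proof.
rewrite mulr_sumr; apply: eq_bigr => k _; rewrite mulr_suml; apply: eq_bigr => j _.
by [].
Qed.

Lemma bilin_gen (v : 'rV[R]_N) (X Y : 'I_N -> R) (c1 c2 c3 c4 : R) :
  \sum_k (\sum_j v ord0 j * (c1 * X j * X k + c2 * X j * Y k + c3 * Y j * X k + c4 * Y j * Y k)) * v ord0 k
  = c1 * ((\sum_j v ord0 j * X j) * (\sum_k v ord0 k * X k))
  + c2 * ((\sum_j v ord0 j * X j) * (\sum_k v ord0 k * Y k))
  + c3 * ((\sum_j v ord0 j * Y j) * (\sum_k v ord0 k * X k))
  + c4 * ((\sum_j v ord0 j * Y j) * (\sum_k v ord0 k * Y k)).
Proof.
rewrite !prod_sums !mulr_sumr -!big_split; apply: eq_bigr => k _.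
rewrite mulr_suml !mulr_sumr -!big_split; apply: eq_bigr => j _ /=.
ring.
Qed.

Lemma dot_delta (c : 'rV[R]_N) j : dot c (delta_mx ord0 j) = c ord0 j.
Proof.
rewrite /dot (bigD1 j) //= big1 ?addr0.
  by rewrite mxE !eqxx mulr1.
by move=> k /negbTE kj; rewrite mxE kj andbF mulr0.
Qed.

Lemma dotC' (c u : 'rV[R]_N) : dot c u = dot u c.
Proof. by apply: eq_bigr => k _; rewrite mulrC. Qed.

Lemma sum_dot_delta (c v : 'rV[R]_N) : \sum_j v ord0 j * dot c (delta_mx ord0 j) = dot c v.
Proof. by rewrite dotC'; apply: eq_bigr => j _; rewrite dot_delta mulrC. Qed.
End Q.

Section QF.
Variables (R : realType) (n m : nat) (a : 'I_m -> 'I_n -> R[i]) (xnat : 'I_n -> R[i]).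
Local Notation N := (n + n)%N.

Lemma sum_Af i (v : 'rV[R]_N) : \sum_j v ord0 j * Af a i (delta_mx ord0 j) = Af a i v.
Proof. exact: sum_dot_delta. Qed.

Lemma sum_Bf i (v : 'rV[R]_N) : \sum_j v ord0 j * Bf a i (delta_mx ord0 j) = Bf a i v.
Proof.
rewrite /Bf dotJ -(sum_dot_delta (Jm (vplus (a i))) v) -sumrN.
by apply: eq_bigr => j _; rewrite dotJ mulrN.
Qed.

Lemma qformE (u v : 'rV[R]_N) : qform (hessian (fobj a xnat) u) v =
  \sum_(i < m) (2 * (2 * Af a i u * Af a i v + 2 * Bf a i u * Bf a i v) ^+ 2
     + 2 * (Af a i u ^+ 2 + Bf a i u ^+ 2 - yv a xnat i) * (2 * Af a i v ^+ 2 + 2 * Bf a i v ^+ 2)).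
Proof.
rewrite /qform mxE.
under eq_bigr => k _ do rewrite !mxE.
under eq_bigr => k _ do under eq_bigr => j _ do rewrite hessE mulr_sumr.
under eq_bigr => k _ do rewrite exchange_big /= mulr_suml.
rewrite exchange_big /=; apply: eq_bigr => i _.
set Au := Af a i u; set Bu := Bf a i u; set g := Au ^+ 2 + Bu ^+ 2 - yv a xnat i.
rewrite -(sum_Af i v) -(sum_Bf i v).
set X := fun j => Af a i (delta_mx ord0 j).
set Y := fun j => Bf a i (delta_mx ord0 j).
rewrite !expr2.
transitivity (\sum_k (\sum_j v ord0 j * ((8 * Au * Au + 4 * g) * X j * X k + (8 * Au * Bu) * X j * Y k
    + (8 * Au * Bu) * Y j * X k + (8 * Bu * Bu + 4 * g) * Y j * Y k)) * v ord0 k).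
  apply: eq_bigr => k _; congr (_ * _); apply: eq_bigr => j _; congr (_ * _).
  rewrite /X /Y /g; ring.
rewrite bilin_gen; ring.
Qed.
End QF.


Section T.
Variable R : realType.
Variable N : nat.
Implicit Types w : 'rV[R]_N.

Lemma tinner_sum m (F : 'I_m -> tensor4 R N) w1 w2 w3 w4 :
  tinner (fun i1 i2 i3 i4 => \sum_(i < m) F i i1 i2 i3 i4) w1 w2 w3 w4
  = \sum_(i < m) tinner (F i) w1 w2 w3 w4.
Proof.
rewrite /tinner [RHS]exchange_big; apply: eq_bigr => i1 _.
rewrite [RHS]exchange_big; apply: eq_bigr => i2 _.
rewrite [RHS]exchange_big; apply: eq_bigr => i3 _.
rewrite [RHS]exchange_big; apply: eq_bigr => i4 _.
by rewrite !mulr_suml.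
Qed.

Lemma tinner_scale (c : R) (F : tensor4 R N) w1 w2 w3 w4 :
  tinner (fun i1 i2 i3 i4 => c * F i1 i2 i3 i4) w1 w2 w3 w4
  = c * tinner F w1 w2 w3 w4.
Proof.
rewrite /tinner mulr_sumr; apply: eq_bigr => i1 _.
rewrite mulr_sumr; apply: eq_bigr => i2 _.
rewrite mulr_sumr; apply: eq_bigr => i3 _.
rewrite mulr_sumr; apply: eq_bigr => i4 _.
by rewrite !mulrA.
Qed.

Lemma tinner_add (F G : tensor4 R N) w1 w2 w3 w4 :
  tinner (fun i1 i2 i3 i4 => F i1 i2 i3 i4 + G i1 i2 i3 i4) w1 w2 w3 w4
  = tinner F w1 w2 w3 w4 + tinner G w1 w2 w3 w4.
Proof.
rewrite /tinner -big_split; apply: eq_bigr => i1 _.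
rewrite -big_split; apply: eq_bigr => i2 _.
rewrite -big_split; apply: eq_bigr => i3 _.
rewrite -big_split; apply: eq_bigr => i4 _ /=.
ring.
Qed.

Lemma tinner_sub (F G : tensor4 R N) w1 w2 w3 w4 :
  tinner (tsub F G) w1 w2 w3 w4 = tinner F w1 w2 w3 w4 - tinner G w1 w2 w3 w4.
Proof.
rewrite /tinner /tsub -sumrB; apply: eq_bigr => i1 _.
rewrite -sumrB; apply: eq_bigr => i2 _.
rewrite -sumrB; apply: eq_bigr => i3 _.
rewrite -sumrB; apply: eq_bigr => i4 _ /=.
ring.
Qed.

Lemma sum4 (F1 F2 F3 F4 : 'I_N -> R) :
  (\sum_i F1 i) * (\sum_i F2 i) * (\sum_i F3 i) * (\sum_i F4 i) =
  \sum_i1 \sum_i2 \sum_i3 \sum_i4 (F1 i1 * F2 i2 * F3 i3 * F4 i4).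
Proof.
rewrite !mulr_suml; apply: eq_bigr => i1 _.
rewrite (mulr_sumr _ _ _ (F1 i1)) !mulr_suml; apply: eq_bigr => i2 _.
rewrite (mulr_sumr _ _ _ (F1 i1 * F2 i2)) !mulr_suml; apply: eq_bigr => i3 _.
rewrite mulr_sumr; apply: eq_bigr => i4 _.
by [].
Qed.

Lemma tinner_rank1 (p : 'rV[R]_N) w1 w2 w3 w4 :
  tinner (fun i1 i2 i3 i4 => p ord0 i1 * p ord0 i2 * p ord0 i3 * p ord0 i4) w1 w2 w3 w4
  = dot p w1 * dot p w2 * dot p w3 * dot p w4.
Proof.
rewrite /dot sum4 /tinner; apply: eq_bigr => i1 _; apply: eq_bigr => i2 _;
  apply: eq_bigr => i3 _; apply: eq_bigr => i4 _; ring.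
Qed.

Lemma sum_only (i : 'I_N) (G : 'I_N -> R) : (forall j, j != i -> G j = 0) -> \sum_j G j = G i.
Proof. by move=> H; rewrite (bigD1 i) //= big1 ?addr0. Qed.

End T.

Lemma tinnerT (R : realType) n m (sigma : R) (a : 'I_m -> 'I_n -> R[i]) (w1 w2 w3 w4 : 'rV[R]_(n + n)) :
  tinner (tensorT sigma a) w1 w2 w3 w4 = (m%:R * sigma ^+ 4)^-1 *
    \sum_(i < m) (dot (vplus (a i)) w1 * dot (vplus (a i)) w2 * dot (vplus (a i)) w3 * dot (vplus (a i)) w4).
Proof.
rewrite /tensorT (tinner_scale _ (fun i1 i2 i3 i4 => \sum_(i < m) (vplus (a i) ord0 i1 * vplus (a i) ord0 i2 * vplus (a i) ord0 i3 * vplus (a i) ord0 i4))).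
rewrite (tinner_sum (fun i i1 i2 i3 i4 => (vplus (a i) ord0 i1 * vplus (a i) ord0 i2 * vplus (a i) ord0 i3 * vplus (a i) ord0 i4))); congr (_ * _); apply: eq_bigr => i _.
exact: tinner_rank1.
Qed.



Section S.
Variable R : realType.
Variable N : nat.
Implicit Types w : 'rV[R]_N.

Lemma bnat (b1 b2 : bool) : ((b1 && b2)%:R : R) = b1%:R * b2%:R.
Proof. by case: b1; case: b2; rewrite /= ?mulr1 ?mul0r ?mulr0. Qed.

Lemma sum_delta (i : 'I_N) (F : 'I_N -> R) : \sum_j (i == j)%:R * F j = F i.
Proof.
rewrite (@sum_only R N i) ?eqxx ?mul1r // => j /negbTE h.
by rewrite eq_sym h mul0r.
Qed.

Lemma tS1 w1 w2 w3 w4 :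
  tinner (fun i1 i2 i3 i4 : 'I_N => ((i1 == i2) && (i3 == i4))%:R) w1 w2 w3 w4
  = dot w1 w2 * dot w3 w4.
Proof.
rewrite /tinner /dot mulr_suml; apply: eq_bigr => i1 _.
transitivity (\sum_i2 (i1 == i2)%:R * (w2 ord0 i2 * \sum_i3 \sum_i4 (i3 == i4)%:R * (w1 ord0 i1 * w3 ord0 i3 * w4 ord0 i4))).
  apply: eq_bigr => i2 _; rewrite !mulr_sumr; apply: eq_bigr => i3 _.
  rewrite !mulr_sumr; apply: eq_bigr => i4 _; rewrite bnat; ring.
rewrite sum_delta mulr_sumr mulr_sumr; apply: eq_bigr => i3 _.
rewrite sum_delta; ring.
Qed.

Lemma tS2 w1 w2 w3 w4 :
  tinner (fun i1 i2 i3 i4 : 'I_N => ((i1 == i3) && (i2 == i4))%:R) w1 w2 w3 w4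
  = dot w1 w3 * dot w2 w4.
Proof.
rewrite /tinner /dot mulr_suml; apply: eq_bigr => i1 _.
rewrite mulr_sumr; apply: eq_bigr => i2 _.
transitivity (\sum_i3 (i1 == i3)%:R * (w3 ord0 i3 * \sum_i4 (i2 == i4)%:R * (w1 ord0 i1 * w2 ord0 i2 * w4 ord0 i4))).
  apply: eq_bigr => i3 _; rewrite !mulr_sumr; apply: eq_bigr => i4 _.
  rewrite bnat; ring.
rewrite sum_delta sum_delta; ring.
Qed.

Lemma tS3 w1 w2 w3 w4 :
  tinner (fun i1 i2 i3 i4 : 'I_N => ((i1 == i4) && (i2 == i3))%:R) w1 w2 w3 w4
  = dot w1 w4 * dot w2 w3.
Proof.
rewrite /tinner /dot mulr_suml; apply: eq_bigr => i1 _.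
rewrite mulr_sumr; apply: eq_bigr => i2 _.
transitivity (\sum_i3 (i2 == i3)%:R * (w3 ord0 i3 * \sum_i4 (i1 == i4)%:R * (w1 ord0 i1 * w2 ord0 i2 * w4 ord0 i4))).
  apply: eq_bigr => i3 _; rewrite !mulr_sumr; apply: eq_bigr => i4 _.
  rewrite bnat; ring.
rewrite sum_delta sum_delta; ring.
Qed.

Lemma tinnerS w1 w2 w3 w4 :
  tinner (@tensorS R N) w1 w2 w3 w4 =
  dot w1 w2 * dot w3 w4 + dot w1 w3 * dot w2 w4 + dot w1 w4 * dot w2 w3.
Proof.
rewrite /tensorS.
rewrite (tinner_add (fun i1 i2 i3 i4 : 'I_N => ((i1 == i2) && (i3 == i4))%:R + ((i1 == i3) && (i2 == i4))%:R)
   (fun i1 i2 i3 i4 : 'I_N => ((i1 == i4) && (i2 == i3))%:R)).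
rewrite (tinner_add (fun i1 i2 i3 i4 : 'I_N => ((i1 == i2) && (i3 == i4))%:R)
   (fun i1 i2 i3 i4 : 'I_N => ((i1 == i3) && (i2 == i4))%:R)).
by rewrite tS1 tS2 tS3.
Qed.
End S.


Section Op.
Variable R : realType.
Variable N : nat.
Implicit Types w : 'rV[R]_N.

Lemma rnorm_ge0 w : 0 <= rnorm w.
Proof. exact: sqrtr_ge0. Qed.

Lemma rnorm2 w : rnorm w ^+ 2 = dot w w.
Proof.
rewrite /rnorm sqr_sqrtr; last by apply: sumr_ge0 => k _; rewrite sqr_ge0.
by apply: eq_bigr => k _; rewrite expr2.
Qed.

Lemma rnormZ (c : R) w : rnorm (c *: w) = `|c| * rnorm w.
Proof.
rewrite /rnorm -sqrtr_sqr -sqrtrM ?sqr_ge0 // mulr_sumr; congr Num.sqrt.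
by apply: eq_bigr => k _; rewrite mxE exprMn.
Qed.

Lemma coord_le w k : `|w ord0 k| <= rnorm w.
Proof.
rewrite -sqrtr_sqr /rnorm ler_wsqrtr // (bigD1 k) //= lerDl.
by apply: sumr_ge0 => j _; rewrite sqr_ge0.
Qed.

Lemma rnorm_eq0 w : rnorm w = 0 -> forall k, w ord0 k = 0.
Proof.
move=> h k; apply/eqP; rewrite -normr_le0 -h; exact: coord_le.
Qed.

Lemma tinnerZ (A : tensor4 R N) c1 c2 c3 c4 w1 w2 w3 w4 :
  tinner A (c1 *: w1) (c2 *: w2) (c3 *: w3) (c4 *: w4) = c1 * c2 * c3 * c4 * tinner A w1 w2 w3 w4.
Proof.
rewrite /tinner mulr_sumr; apply: eq_bigr => i1 _.
rewrite mulr_sumr; apply: eq_bigr => i2 _.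
rewrite mulr_sumr; apply: eq_bigr => i3 _.
rewrite mulr_sumr; apply: eq_bigr => i4 _.
rewrite !mxE; ring.
Qed.

Definition absB (A : tensor4 R N) : R :=
  \sum_i1 \sum_i2 \sum_i3 \sum_i4 `|A i1 i2 i3 i4|.

Lemma tinner_bound (A : tensor4 R N) w1 w2 w3 w4 :
  `|tinner A w1 w2 w3 w4| <= absB A * (rnorm w1 * rnorm w2 * rnorm w3 * rnorm w4).
Proof.
rewrite /tinner /absB.
apply: (le_trans (ler_norm_sum _ _ _)); rewrite mulr_suml; apply: ler_sum => i1 _.
apply: (le_trans (ler_norm_sum _ _ _)); rewrite mulr_suml; apply: ler_sum => i2 _.
apply: (le_trans (ler_norm_sum _ _ _)); rewrite mulr_suml; apply: ler_sum => i3 _.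
apply: (le_trans (ler_norm_sum _ _ _)); rewrite mulr_suml; apply: ler_sum => i4 _.
rewrite !normrM !mulrA; do 4?[apply: ler_pM] => //;
  rewrite ?mulr_ge0 ?normr_ge0 ?coord_le //.
Qed.

Lemma tinner_le_op (A : tensor4 R N) w1 w2 w3 w4 :
  0 < rnorm w1 -> 0 < rnorm w2 -> 0 < rnorm w3 -> 0 < rnorm w4 ->
  tinner A w1 w2 w3 w4 <= opnorm A * (rnorm w1 * rnorm w2 * rnorm w3 * rnorm w4).
Proof.
move=> p1 p2 p3 p4.
set S := [set r : R | exists u1 u2 u3 u4 : 'rV[R]_N,
         rnorm u1 * rnorm u2 * rnorm u3 * rnorm u4 = 1 /\ r = tinner A u1 u2 u3 u4]%classic.
have inS : S (tinner A ((rnorm w1)^-1 *: w1) ((rnorm w2)^-1 *: w2) ((rnorm w3)^-1 *: w3) ((rnorm w4)^-1 *: w4)).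
  exists ((rnorm w1)^-1 *: w1), ((rnorm w2)^-1 *: w2), ((rnorm w3)^-1 *: w3), ((rnorm w4)^-1 *: w4).
  split => //.
  rewrite !rnormZ !ger0_norm ?invr_ge0 ?rnorm_ge0 // !mulVf ?mulr1 //; apply/lt0r_neq0 => //.
have hs : has_sup S.
  split; first by eexists; exact: inS.
  exists (absB A) => r [u1 [u2 [u3 [u4 [h1 ->]]]]].
  apply: (le_trans (ler_norm _)); apply: (le_trans (tinner_bound _ _ _ _ _)).
  by rewrite h1 mulr1.
have := sup_upper_bound hs inS.
rewrite tinnerZ -/(opnorm A) => H.
have pp : 0 < rnorm w1 * rnorm w2 * rnorm w3 * rnorm w4 by rewrite !mulr_gt0.
have E : tinner A w1 w2 w3 w4 = (rnorm w1 * rnorm w2 * rnorm w3 * rnorm w4) *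
   ((rnorm w1)^-1 / rnorm w2 / rnorm w3 / rnorm w4 * tinner A w1 w2 w3 w4).
  field; rewrite ?lt0r_neq0 //.
by rewrite E (mulrC (opnorm A)) ler_pM2l.
Qed.
Lemma tinner_zero (A : tensor4 R N) w1 w2 w3 w4 :
  rnorm w1 * rnorm w2 * rnorm w3 * rnorm w4 = 0 -> tinner A w1 w2 w3 w4 = 0.
Proof.
move=> /eqP; rewrite !mulf_eq0 -!orbA => /or4P h.
rewrite /tinner; apply: big1 => i1 _; apply: big1 => i2 _; apply: big1 => i3 _; apply: big1 => i4 _.
case: h => /eqP h; rewrite (rnorm_eq0 h); ring.
Qed.

Lemma tinner_abs_op (A : tensor4 R N) w1 w2 w3 w4 :
  `|tinner A w1 w2 w3 w4| <= opnorm A * (rnorm w1 * rnorm w2 * rnorm w3 * rnorm w4).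
Proof.
have [z|nz] := eqVneq (rnorm w1 * rnorm w2 * rnorm w3 * rnorm w4) 0.
  by rewrite tinner_zero // z normr0 mulr0.
have p : forall w, rnorm w != 0 -> 0 < rnorm w by move=> w hw; rewrite lt0r hw rnorm_ge0.
move: nz; rewrite !mulf_eq0 !negb_or => /andP[/andP[/andP[/p h1 /p h2] /p h3] /p h4].
rewrite ler_norml; apply/andP; split; last exact: tinner_le_op.
have h1' : 0 < rnorm ((-1) *: w1) by rewrite rnormZ normrN1 mul1r.
have := tinner_le_op A h1' h2 h3 h4.
have -> : tinner A ((-1) *: w1) w2 w3 w4 = tinner A ((-1) *: w1) (1 *: w2) (1 *: w3) (1 *: w4) by rewrite !scale1r.
rewrite tinnerZ rnormZ normrN1 mul1r !mulr1 mulN1r.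
by rewrite lerNl.
Qed.
End Op.


Lemma rnormJ (R : realType) n (w : 'rV[R]_(n + n)) : rnorm (Jm w) = rnorm w.
Proof.
have E : forall w' : 'rV[R]_(n + n), rnorm w' = Num.sqrt (dot w' w').
  by move=> w'; rewrite /rnorm; congr Num.sqrt; apply: eq_bigr => k _; rewrite expr2.
by rewrite !E dotJJ.
Qed.

Theorem proposition6 :
  forall R : realType, exists C2 : R, 0 < C2 /\
  forall (n m : nat) (a : 'I_m -> 'I_n -> R[i]) (xnat : 'I_n -> R[i])
         (sigma delta0 : R) (x : 'I_n -> R[i]),
    (0 < n)%N -> (0 < m)%N -> xnat <> (fun=> 0) -> 0 < sigma -> 0 < delta0 ->
    opnorm (tsub (tensorT sigma a) (@tensorS R (n + n)%N)) < delta0 ->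
    8 * (cmod (cinner x xnat) ^+ 2 / cnorm xnat ^+ 4)
      + (4 + delta0 * C2 / 4) * (cnorm x ^+ 2 / cnorm xnat ^+ 2)
      <= 4 - delta0 * C2 / 4 ->
    qform (hessian (fobj a xnat) (vplus x)) (vplus xnat) < 0.
Proof.
move=> R; exists 24; split => // n m a xnat sigma d x hn hm hx hs hd hop hyp.
set u := vplus x; set v := vplus xnat.
set c := m%:R * sigma ^+ 4.
have cpos : 0 < c by rewrite mulr_gt0 ?exprn_gt0 // ltr0n.
set M := fun w1 w2 w3 w4 : 'rV[R]_(n + n) => \sum_(i < m)
  (dot (vplus (a i)) w1 * dot (vplus (a i)) w2 * dot (vplus (a i)) w3 * dot (vplus (a i)) w4).
set T := tensorT sigma a; set S := @tensorS R (n + n)%N; set E := tsub T S.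
have HM : forall w1 w2 w3 w4, M w1 w2 w3 w4 = c * (tinner S w1 w2 w3 w4 + tinner E w1 w2 w3 w4).
  move=> w1 w2 w3 w4; rewrite /E tinner_sub /T tinnerT -/c addrC subrK.
  by rewrite /M mulrA mulfV ?mul1r // lt0r_neq0.
rewrite qformE.
have HL : \sum_(i < m) (2 * (2 * Af a i u * Af a i v + 2 * Bf a i u * Bf a i v) ^+ 2
     + 2 * (Af a i u ^+ 2 + Bf a i u ^+ 2 - yv a xnat i) * (2 * Af a i v ^+ 2 + 2 * Bf a i v ^+ 2))
  = 12 * M u u v v + 16 * M u v (Jm u) (Jm v) + 12 * M (Jm u) (Jm u) (Jm v) (Jm v)
    + 4 * M u u (Jm v) (Jm v) + 4 * M (Jm u) (Jm u) v v - 4 * M v v v v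
    - 8 * M v v (Jm v) (Jm v) - 4 * M (Jm v) (Jm v) (Jm v) (Jm v).
  rewrite /M !mulr_sumr -!big_split -!sumrB; apply: eq_bigr => i _ /=.
  rewrite /yv -[xnat in cinner _ xnat]unplusK cmod_cinner /Af /Bf; ring.
rewrite HL !HM.
have e1 : dot v (Jm u) = - dot u (Jm v) by rewrite dotJ dotC.
have e2 : dot (Jm u) v = - dot u (Jm v) by rewrite dotC e1.
rewrite /S !tinnerS !dotJJ !dotJself e1 e2 -!rnorm2.
set ru := rnorm u; set rv := rnorm v; set sv := dot u v; set tv := dot u (Jm v).
have Bd : forall w1 w2 w3 w4, -(opnorm E * (rnorm w1 * rnorm w2 * rnorm w3 * rnorm w4)) <= tinner E w1 w2 w3 w4
   /\ tinner E w1 w2 w3 w4 <= opnorm E * (rnorm w1 * rnorm w2 * rnorm w3 * rnorm w4).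
  by move=> w1 w2 w3 w4; apply/andP; rewrite -ler_norml; exact: tinner_abs_op.
have [b1l b1r] := Bd u u v v.
have [b2l b2r] := Bd u v (Jm u) (Jm v).
have [b3l b3r] := Bd (Jm u) (Jm u) (Jm v) (Jm v).
have [b4l b4r] := Bd u u (Jm v) (Jm v).
have [b5l b5r] := Bd (Jm u) (Jm u) v v.
have [b6l b6r] := Bd v v v v.
have [b7l b7r] := Bd v v (Jm v) (Jm v).
have [b8l b8r] := Bd (Jm v) (Jm v) (Jm v) (Jm v).
move: b1l b1r b2l b2r b3l b3r b4l b4r b5l b5r b6l b6r b7l b7r b8l b8r.
rewrite !rnormJ -/ru -/rv.
set op := opnorm E.
set E1 := tinner E u u v v. set E2 := tinner E u v (Jm u) (Jm v).
set E3 := tinner E (Jm u) (Jm u) (Jm v) (Jm v). set E4 := tinner E u u (Jm v) (Jm v).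
set E5 := tinner E (Jm u) (Jm u) v v. set E6 := tinner E v v v v.
set E7 := tinner E v v (Jm v) (Jm v). set E8 := tinner E (Jm v) (Jm v) (Jm v) (Jm v).
move=> b1l b1r b2l b2r b3l b3r b4l b4r b5l b5r b6l b6r b7l b7r b8l b8r.
have rv0 : 0 < rv.
  rewrite lt0r rnorm_ge0 andbT; apply/negP => /eqP h0; apply: hx.
  apply/funext => j; rewrite -(unplusK xnat) -/v /unplus !(rnorm_eq0 h0) //.
have hK : cmod (cinner x xnat) ^+ 2 = sv ^+ 2 + tv ^+ 2.
  by rewrite -[xnat in cinner _ xnat]unplusK cmod_cinner.
have hU : cnorm x ^+ 2 = ru ^+ 2 by rewrite cnorm2 -rnorm2.
have hV : cnorm xnat ^+ 2 = rv ^+ 2 by rewrite cnorm2 -rnorm2.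
have hV4 : cnorm xnat ^+ 4 = rv ^+ 2 * rv ^+ 2 by rewrite -hV -expr2 -exprM.
rewrite hK hU hV hV4 in hyp.
have W0 : 0 < rv ^+ 2 by rewrite exprn_gt0.
have H2 : 8 * (sv ^+ 2 + tv ^+ 2) + (4 + d * 24 / 4) * (ru ^+ 2 * rv ^+ 2) <= (4 - d * 24 / 4) * (rv ^+ 2 * rv ^+ 2).
  have := ler_wpM2r (ltW (mulr_gt0 W0 W0)) hyp.
  have -> : (8 * ((sv ^+ 2 + tv ^+ 2) / (rv ^+ 2 * rv ^+ 2)) + (4 + d * 24 / 4) * (ru ^+ 2 / rv ^+ 2)) * (rv ^+ 2 * rv ^+ 2)
     = 8 * (sv ^+ 2 + tv ^+ 2) + (4 + d * 24 / 4) * (ru ^+ 2 * rv ^+ 2).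
    by field; rewrite lt0r_neq0.
  by [].
have F4 : 0 <= (d - op) * (ru ^+ 2 * rv ^+ 2) by apply: mulr_ge0; [rewrite subr_ge0; exact: ltW | rewrite mulr_ge0 ?sqr_ge0].
have F5 : 0 <= (d - op) * (rv ^+ 2 * rv ^+ 2) by apply: mulr_ge0; [rewrite subr_ge0; exact: ltW | rewrite mulr_ge0 ?sqr_ge0].
have F6 : 0 < d * (rv ^+ 2 * rv ^+ 2) by rewrite mulr_gt0 // mulr_gt0.
have F7 : 0 <= tv ^+ 2 by rewrite sqr_ge0.
have HX : 12 * (ru ^+ 2 * rv ^+ 2 + sv * sv + sv * sv + E1) + 16 * (sv * sv - tv * tv + E2)
   + 12 * (ru ^+ 2 * rv ^+ 2 + sv * sv + sv * sv + E3) + 4 * (ru ^+ 2 * rv ^+ 2 + tv * tv + tv * tv + E4)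
   + 4 * (ru ^+ 2 * rv ^+ 2 + tv * tv + tv * tv + E5) - 4 * (3 * (rv ^+ 2 * rv ^+ 2) + E6)
   - 8 * (rv ^+ 2 * rv ^+ 2 + E7) - 4 * (3 * (rv ^+ 2 * rv ^+ 2) + E8) < 0.
  move: b1l b1r b2l b2r b3l b3r b4l b4r b5l b5r b6l b6r b7l b7r b8l b8r H2 F4 F5 F6 F7.
  rewrite !expr2; lra.
have HcX := mulr_gt0 cpos (etrans (oppr_gt0 _) HX).
move: HcX; rewrite !expr2; lra.
Qed.
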